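(* Let $\mathcal C$ be a weakly fusion category over an algebraically closed field $k$ and let $M$ be a simple object of $\mathcal C$ such that the object $M\otimes{}^*M$ has a rigid left dual. Then $M$ has a rigid left dual.
   Context: A monoidal r-category is a monoidal category $(\mathcal C,\otimes,\mathbf 1)$ such that for each object $X$ the functor $Y\mapsto\mathrm{Hom}(\mathbf 1,X\otimes Y)$ is representable by an object $X^*$ (natural isomorphisms $\mathrm{Hom}(\mathbf 1,X\otimes Y)\cong \mathrm{Hom}(X^*,Y)$), and $X\mapsto X^*$ is an equivalence $\mathcal C\to\mathcal C^{\mathrm{op}}$ whose inverse is denoted $X\mapsto{}^*X$. A weakly fusion category over $k$ is a finite semisimple $k$-linear abelian monoidal r-category whose unit $\mathbf 1$ is simple. An object $X$ has a rigid left dual if there are an object $X'$ and morphisms $c:\mathbf 1\to X\otimes X'$, $d:X'\otimes X\to\mathbf 1$ satisfying $(\mathrm{id}_X\otimes d)\circ(c\otimes\mathrm{id}_X)=\mathrm{id}_X$ and $(d\otimes\mathrm{id}_{X'})\circ(\mathrm{id}_{X'}\otimes c)=\mathrm{id}_{X'}$ (i.e. $X'\otimes(-)$ is left adjoint to $X\otimes(-)$). *)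

(* Defs.v *)
From HB Require Import structures.
From mathcomp Require Import all_boot all_algebra.
Set Implicit Arguments. Unset Strict Implicit. Unset Printing Implicit Defensive.
Import GRing.Theory.
Local Open Scope ring_scope.

Record LinCat (k : fieldType) := {
  ob :> Type;
  hom : ob -> ob -> lmodType k;
  idm : forall a, hom a a;
  comp : forall a b c, hom b c -> hom a b -> hom a c;
  comp_assoc : forall a b c d (f : hom c d) (g : hom b c) (h : hom a b),
      comp f (comp g h) = comp (comp f g) h;
  comp_id_l : forall a b (f : hom a b), comp (idm b) f = f;
  comp_id_r : forall a b (f : hom a b), comp f (idm a) = f;
  comp_linear_l : forall a b c (h : hom a b) (r : k) (f g : hom b c),
      comp (r *: f + g) h = r *: comp f h + comp g h;
  comp_linear_r : forall a b c (f : hom b c) (r : k) (g h : hom a b),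
      comp f (r *: g + h) = r *: comp f g + comp f h
}.
Arguments hom {k C} : rename.
Arguments idm {k C} : rename.
Arguments comp {k C a b c} : rename.

Section CatDefs.
Variables (k : fieldType) (C : LinCat k).

Definition iso (a b : C) (f : hom a b) :=
  exists g : hom b a, comp g f = idm a /\ comp f g = idm b.
Definition isomorphic (a b : C) := exists f : hom a b, iso f.
Definition mono (a b : C) (f : hom a b) :=
  forall (z : C) (g h : hom z a), comp f g = comp f h -> g = h.
Definition epi (a b : C) (f : hom a b) :=
  forall (z : C) (g h : hom b z), comp g f = comp h f -> g = h.

Definition is_zero (z : C) :=
  (forall (a : C) (f g : hom z a), f = g) /\ (forall (a : C) (f g : hom a z), f = g).

Definition is_biproduct (a b p : C) (i1 : hom a p) (i2 : hom b p)
    (p1 : hom p a) (p2 : hom p b) :=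
  [/\ comp p1 i1 = idm a, comp p2 i2 = idm b, comp p2 i1 = 0, comp p1 i2 = 0
    & comp i1 p1 + comp i2 p2 = idm p].

Definition is_kernel (a b z : C) (f : hom a b) (m : hom z a) :=
  comp f m = 0 /\
  forall (w : C) (g : hom w a), comp f g = 0 -> exists! h : hom w z, comp m h = g.
Definition is_cokernel (a b z : C) (f : hom a b) (e : hom b z) :=
  comp e f = 0 /\
  forall (w : C) (g : hom b w), comp g f = 0 -> exists! h : hom z w, comp h e = g.

Definition abelian :=
  (exists z : C, is_zero z) /\
  (forall a b : C, exists (p : C) (i1 : hom a p) (i2 : hom b p) (p1 : hom p a)
        (p2 : hom p b), is_biproduct i1 i2 p1 p2) /\
  (forall (a b : C) (f : hom a b), exists (z : C) (m : hom z a), is_kernel f m) /\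
  (forall (a b : C) (f : hom a b), exists (z : C) (e : hom b z), is_cokernel f e) /\
  (forall (a b : C) (m : hom a b), mono m -> exists (c : C) (f : hom b c), is_kernel f m) /\
  (forall (a b : C) (e : hom a b), epi e -> exists (c : C) (f : hom c a), is_cokernel f e).

Definition simple (x : C) :=
  ~ is_zero x /\ forall (y : C) (m : hom y x), mono m -> is_zero y \/ iso m.

Inductive sum_of_simples : C -> Prop :=
| sos_zero (z : C) : is_zero z -> sum_of_simples z
| sos_add (a s p : C) (i1 : hom a p) (i2 : hom s p) (p1 : hom p a) (p2 : hom p s) :
    sum_of_simples a -> simple s -> is_biproduct i1 i2 p1 p2 -> sum_of_simples p.

Definition semisimple := forall x : C, sum_of_simples x.

Definition findim_homs := forall a b : C,
  exists (n : nat) (v : 'I_n -> hom a b),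
    forall f : hom a b, exists c : 'I_n -> k, f = \sum_(i < n) c i *: v i.

Definition finitely_many_simples :=
  exists (n : nat) (S : 'I_n -> C),
    forall x : C, simple x -> exists i : 'I_n, isomorphic x (S i).

Definition finite_semisimple :=
  [/\ abelian, semisimple, findim_homs & finitely_many_simples].

End CatDefs.

Section MonoidalDef.
Variables (k : fieldType) (C : LinCat k).

Record Monoidal := {
  tens : C -> C -> C;
  tensm : forall a b c d : C, hom a b -> hom c d -> hom (tens a c) (tens b d);
  unit : C;
  assoc : forall a b c : C, hom (tens (tens a b) c) (tens a (tens b c));
  assoc_inv : forall a b c : C, hom (tens a (tens b c)) (tens (tens a b) c);
  lunit : forall a : C, hom (tens unit a) a;
  lunit_inv : forall a : C, hom a (tens unit a);
  runit : forall a : C, hom (tens a unit) a;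
  runit_inv : forall a : C, hom a (tens a unit);
  tensm_id : forall a c : C, tensm (idm a) (idm c) = idm (tens a c);
  tensm_comp : forall (a b e c d f : C) (g1 : hom b e) (g2 : hom a b)
      (h1 : hom d f) (h2 : hom c d),
      tensm (comp g1 g2) (comp h1 h2) = comp (tensm g1 h1) (tensm g2 h2);
  tensm_linear_l : forall (a b c d : C) (r : k) (f g : hom a b) (h : hom c d),
      tensm (r *: f + g) h = r *: tensm f h + tensm g h;
  tensm_linear_r : forall (a b c d : C) (r : k) (f : hom a b) (g h : hom c d),
      tensm f (r *: g + h) = r *: tensm f g + tensm f h;
  assoc_invK : forall a b c : C, comp (assoc_inv a b c) (assoc a b c) = idm _;
  assoc_Kinv : forall a b c : C, comp (assoc a b c) (assoc_inv a b c) = idm _;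
  lunit_invK : forall a : C, comp (lunit_inv a) (lunit a) = idm _;
  lunit_Kinv : forall a : C, comp (lunit a) (lunit_inv a) = idm _;
  runit_invK : forall a : C, comp (runit_inv a) (runit a) = idm _;
  runit_Kinv : forall a : C, comp (runit a) (runit_inv a) = idm _;
  assoc_nat : forall (a a' b b' c c' : C) (f : hom a a') (g : hom b b') (h : hom c c'),
      comp (assoc a' b' c') (tensm (tensm f g) h) = comp (tensm f (tensm g h)) (assoc a b c);
  lunit_nat : forall (a b : C) (f : hom a b),
      comp (lunit b) (tensm (idm unit) f) = comp f (lunit a);
  runit_nat : forall (a b : C) (f : hom a b),
      comp (runit b) (tensm f (idm unit)) = comp f (runit a);
  pentagon : forall a b c d : C,
      comp (tensm (idm a) (assoc b c d))
        (comp (assoc a (tens b c) d) (tensm (assoc a b c) (idm d)))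
      = comp (assoc a b (tens c d)) (assoc (tens a b) c d);
  triangle : forall a b : C,
      comp (tensm (idm a) (lunit b)) (assoc a unit b) = tensm (runit a) (idm b)
}.

End MonoidalDef.
Arguments tens {k C} m _ _ : rename.
Arguments tensm {k C} m {a b c d} : rename.
Arguments unit {k C} m : rename.
Arguments assoc {k C} m : rename.
Arguments assoc_inv {k C} m : rename.
Arguments lunit {k C} m : rename.
Arguments lunit_inv {k C} m : rename.
Arguments runit {k C} m : rename.
Arguments runit_inv {k C} m : rename.

(* r-category structure: for each X, an object X^* representing
   Y |-> Hom(1, X (x) Y), via natural bijections phi (with inverse psi). *)
Section RCatDef.
Variables (k : fieldType) (C : LinCat k) (T : Monoidal C).

Record RStr := {
  dual : C -> C;
  rphi : forall x y : C, hom (unit T) (tens T x y) -> hom (dual x) y;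
  rpsi : forall x y : C, hom (dual x) y -> hom (unit T) (tens T x y);
  rphiK : forall x y : C, cancel (@rphi x y) (@rpsi x y);
  rpsiK : forall x y : C, cancel (@rpsi x y) (@rphi x y);
  rphi_nat : forall (x y y' : C) (g : hom y y') (u : hom (unit T) (tens T x y)),
      @rphi x y' (comp (tensm T (idm x) g) u) = comp g (@rphi x y u)
}.

(* the (contravariant) action of X |-> X^* on morphisms, induced by Yoneda *)
Definition dualm (R : RStr) (x x' : C) (f : hom x x') : hom (dual R x') (dual R x) :=
  @rphi R x' (dual R x) (comp (tensm T f (idm (dual R x))) (@rpsi R x (dual R x) (idm _))).

(* X |-> X^* is an equivalence C -> C^op: fully faithful and essentially surjective *)
Definition dual_equivalence (R : RStr) :=
  (forall x x' : C, bijective (@dualm R x x'))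
  /\ (forall z : C, exists x : C, isomorphic (dual R x) z).

Definition is_rcategory (R : RStr) := dual_equivalence R.

Definition weakly_fusion (R : RStr) :=
  [/\ finite_semisimple C, is_rcategory R & simple (unit T)].

Definition has_rigid_left_dual (x : C) :=
  exists (x' : C) (c : hom (unit T) (tens T x x')) (d : hom (tens T x' x) (unit T)),
    comp (runit T x) (comp (tensm T (idm x) d)
      (comp (assoc T x x' x) (comp (tensm T c (idm x)) (lunit_inv T x)))) = idm x
    /\
    comp (lunit T x') (comp (tensm T d (idm x'))
      (comp (assoc_inv T x' x x') (comp (tensm T (idm x') c) (runit_inv T x')))) = idm x'.

End RCatDef.

(* Main.v *)
Require Import Defs.
From HB Require Import structures.
From mathcomp Require Import all_boot all_algebra.
Import Defs.
Set Implicit Arguments. Unset Strict Implicit. Unset Printing Implicit Defensive.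
Import GRing.Theory.
Local Open Scope ring_scope.

Section Coh.
Variables (k : fieldType) (C : LinCat k) (T : Monoidal C).
Local Notation "f ∘ g" := (comp f g) (at level 40, left associativity).
Local Notation "f ⊗ g" := (tensm T f g) (at level 35).
Local Notation "x ⊠ y" := (tens T x y) (at level 35).
Local Notation I := (unit T).
Local Notation asc := (assoc T).
Local Notation asci := (assoc_inv T).
Local Notation lu := (lunit T).
Local Notation lui := (lunit_inv T).
Local Notation ru := (runit T).
Local Notation rui := (runit_inv T).

Lemma t2 (x y z : C) (f : hom y z) (g : hom x y) (u : hom x z) :
  f ∘ g = u -> forall v (t : hom v x), f ∘ (g ∘ t) = u ∘ t.
Proof. by move=> E v t; rewrite comp_assoc E. Qed.
Lemma t3 (w x y z : C) (f : hom y z) (g : hom x y) (h : hom w x) (u : hom w z) :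
  f ∘ (g ∘ h) = u -> forall v (t : hom v w), f ∘ (g ∘ (h ∘ t)) = u ∘ t.
Proof. by move=> E v t; rewrite (comp_assoc g h t) (comp_assoc f (g ∘ h) t) E. Qed.
Lemma t4 (w0 w x y z : C) (f : hom y z) (g : hom x y) (h : hom w x) (h0 : hom w0 w) (u : hom w0 z) :
  f ∘ (g ∘ (h ∘ h0)) = u -> forall v (t : hom v w0), f ∘ (g ∘ (h ∘ (h0 ∘ t))) = u ∘ t.
Proof. by move=> E v t; rewrite (comp_assoc h h0 t) (t3 E). Qed.

Lemma comp0r (x y z : C) (f : hom y z) : f ∘ (0 : hom x y) = 0.
Proof.
have := comp_linear_r f 1 (0 : hom x y) 0.
rewrite !scale1r addr0 => H.
by have := congr1 (fun q => q - comp f 0) H; rewrite subrr addrK => <-.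
Qed.
Lemma comp0l (x y z : C) (f : hom x y) : (0 : hom y z) ∘ f = 0.
Proof.
have := comp_linear_l f 1 (0 : hom y z) 0.
rewrite !scale1r addr0 => H.
by have := congr1 (fun q => q - comp 0 f) H; rewrite subrr addrK => <-.
Qed.
Lemma compBr (x y z : C) (f : hom y z) (g h : hom x y) : f ∘ (g - h) = f ∘ g - f ∘ h.
Proof. by have := comp_linear_r f (-1) h g; rewrite !scaleN1r addrC => ->; rewrite addrC. Qed.
Lemma compDl (x y z : C) (f : hom x y) (g h : hom y z) : (g + h) ∘ f = g ∘ f + h ∘ f.
Proof. by have := comp_linear_l f 1 g h; rewrite !scale1r. Qed.

Lemma tidl (x a b c : C) (f : hom b c) (g : hom a b) : idm x ⊗ (f ∘ g) = (idm x ⊗ f) ∘ (idm x ⊗ g).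
Proof. by rewrite -tensm_comp comp_id_l. Qed.
Lemma tidr (x a b c : C) (f : hom b c) (g : hom a b) : (f ∘ g) ⊗ idm x = (f ⊗ idm x) ∘ (g ⊗ idm x).
Proof. by rewrite -tensm_comp comp_id_l. Qed.
Lemma xch1 (a b c d : C) (f : hom a b) (g : hom c d) : (f ⊗ idm d) ∘ (idm a ⊗ g) = f ⊗ g.
Proof. by rewrite -tensm_comp comp_id_l comp_id_r. Qed.
Lemma xch2 (a b c d : C) (f : hom a b) (g : hom c d) : (idm b ⊗ g) ∘ (f ⊗ idm c) = f ⊗ g.
Proof. by rewrite -tensm_comp comp_id_l comp_id_r. Qed.

Lemma lui_nat (a b : C) (f : hom a b) : (idm I ⊗ f) ∘ lui a = lui b ∘ f.
Proof.
rewrite -[LHS]comp_id_l -(lunit_invK T b) -comp_assoc (comp_assoc (lu b)) lunit_nat.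
by rewrite -!comp_assoc lunit_Kinv comp_id_r.
Qed.
Lemma rui_nat (a b : C) (f : hom a b) : (f ⊗ idm I) ∘ rui a = rui b ∘ f.
Proof.
rewrite -[LHS]comp_id_l -(runit_invK T b) -comp_assoc (comp_assoc (ru b)) runit_nat.
by rewrite -!comp_assoc runit_Kinv comp_id_r.
Qed.
Lemma asci_nat (a a' b b' c c' : C) (f : hom a a') (g : hom b b') (h : hom c c') :
  asci a' b' c' ∘ (f ⊗ (g ⊗ h)) = ((f ⊗ g) ⊗ h) ∘ asci a b c.
Proof.
rewrite -[LHS]comp_id_r -(assoc_Kinv T a b c) !comp_assoc -(comp_assoc _ _ (asc a b c)).
by rewrite -assoc_nat comp_assoc assoc_invK comp_id_l.
Qed.

Lemma lfaith (a b : C) (f g : hom a b) : idm I ⊗ f = idm I ⊗ g -> f = g.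
Proof.
move=> E.
have H : forall h : hom a b, h = lu b ∘ (idm I ⊗ h) ∘ lui a.
  by move=> h; rewrite lunit_nat -comp_assoc lunit_Kinv comp_id_r.
by rewrite (H f) (H g) E.
Qed.
Lemma rfaith (a b : C) (f g : hom a b) : f ⊗ idm I = g ⊗ idm I -> f = g.
Proof.
move=> E.
have H : forall h : hom a b, h = ru b ∘ (h ⊗ idm I) ∘ rui a.
  by move=> h; rewrite runit_nat -comp_assoc runit_Kinv comp_id_r.
by rewrite (H f) (H g) E.
Qed.

Lemma iso_cancel_r (a b c : C) (f g : hom b c) (h : hom a b) (h' : hom b a) :
  h ∘ h' = idm b -> f ∘ h = g ∘ h -> f = g.
Proof. by move=> E H; rewrite -[f]comp_id_r -[g]comp_id_r -E !comp_assoc H. Qed.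

(* Kelly's lemmas *)
Lemma K1 (x y : C) : lu (x ⊠ y) ∘ asc I x y = lu x ⊗ idm y.
Proof.
apply: lfaith.
apply: (@iso_cancel_r _ _ _ _ _ (asc I (I ⊠ x) y ∘ (asc I I x ⊗ idm y))
                     ((asci I I x ⊗ idm y) ∘ asci I (I ⊠ x) y)).
  by rewrite -comp_assoc (comp_assoc (asc I I x ⊗ idm y)) -tidr assoc_Kinv tensm_id comp_id_l assoc_Kinv.
rewrite tidl -comp_assoc pentagon comp_assoc triangle.
rewrite -(tensm_id T x y) -assoc_nat -(triangle T I x) tidr comp_assoc assoc_nat.
by rewrite -comp_assoc.
Qed.

Lemma iso_cancel_l (a b c : C) (f g : hom a b) (h : hom b c) (h' : hom c b) :
  h' ∘ h = idm b -> h ∘ f = h ∘ g -> f = g.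
Proof. by move=> E H; rewrite -[f]comp_id_l -[g]comp_id_l -E -!comp_assoc H. Qed.

Lemma K2 (x y : C) : (idm x ⊗ ru y) ∘ asc x y I = ru (x ⊠ y).
Proof.
apply: rfaith; symmetry.
apply: (@iso_cancel_l _ _ _ _ _ (asc x y I) (asci x y I)); first exact: assoc_invK.
rewrite -(triangle T (x ⊠ y) I) -(tensm_id T x y) comp_assoc assoc_nat -comp_assoc -pentagon.
rewrite !comp_assoc -tidl triangle -assoc_nat -comp_assoc -tidr.
done.
Qed.

Lemma K3 : lu I = ru I.
Proof.
have E : lu (I ⊠ I) = idm I ⊗ lu I.
  apply: (@iso_cancel_l _ _ _ _ _ (lu I) (lui I)); first exact: lunit_invK.
  by rewrite lunit_nat.
apply: rfaith; rewrite -K1 -triangle E //.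
Qed.

Lemma pent_inv (x y z w : C) :
  (idm x ⊗ asci y z w) ∘ asc x y (z ⊠ w)
  = asc x (y ⊠ z) w ∘ (asc x y z ⊗ idm w) ∘ asci (x ⊠ y) z w.
Proof.
rewrite -[LHS]comp_id_r -(assoc_Kinv T (x ⊠ y) z w) !comp_assoc -(comp_assoc _ (asc x y (z ⊠ w))).
rewrite -pentagon !comp_assoc -tidl assoc_invK tensm_id comp_id_l.
done.
Qed.

Lemma lemG (X X' W : C) (c : hom I (X ⊠ X')) (d : hom (X' ⊠ X) I) :
  (idm X ⊗ (lu W ∘ (d ⊗ idm W) ∘ asci X' X W)) ∘ asc X X' (X ⊠ W) ∘ (c ⊗ idm (X ⊠ W))
  = ((ru X ∘ (idm X ⊗ d) ∘ asc X X' X ∘ (c ⊗ idm X)) ⊗ idm W) ∘ asci I X W.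
Proof.
rewrite !tidl -(comp_assoc _ (idm X ⊗ asci X' X W)) pent_inv.
rewrite !comp_assoc -(comp_assoc (idm X ⊗ lu W)) -assoc_nat.
rewrite !comp_assoc triangle.
rewrite -(tensm_id T X W) -!comp_assoc asci_nat.
by rewrite !tidr !comp_assoc.
Qed.

Lemma tl2 (x y z : C) (u : hom y z) (v : hom x y) (W : hom x z) :
  u ∘ v = W -> forall (z' : C) (X : hom z z'), X ∘ u ∘ v = X ∘ W.
Proof. by move=> E z' X; rewrite -E !comp_assoc. Qed.
Lemma tl3 (w x y z : C) (u : hom y z) (v : hom x y) (t : hom w x) (W : hom w z) :
  u ∘ v ∘ t = W -> forall (z' : C) (X : hom z z'), X ∘ u ∘ v ∘ t = X ∘ W.
Proof. by move=> E z' X; rewrite -E !comp_assoc. Qed.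
Lemma tl4 (w0 w x y z : C) (u : hom y z) (v : hom x y) (t : hom w x) (t0 : hom w0 w) (W : hom w0 z) :
  u ∘ v ∘ t ∘ t0 = W -> forall (z' : C) (X : hom z z'), X ∘ u ∘ v ∘ t ∘ t0 = X ∘ W.
Proof. by move=> E z' X; rewrite -E !comp_assoc. Qed.

Lemma K1i (x y : C) : (lu x ⊗ idm y) ∘ asci I x y = lu (x ⊠ y).
Proof. by rewrite -K1 -comp_assoc assoc_Kinv comp_id_r. Qed.
Lemma K2i (x y : C) : idm x ⊗ rui y = asc x y I ∘ rui (x ⊠ y).
Proof.
rewrite -[LHS]comp_id_r -(runit_Kinv T (x ⊠ y)) -K2 !comp_assoc -tidl runit_invK tensm_id.
by rewrite comp_id_l.
Qed.

Lemma zigL (X X' : C) (c : hom I (X ⊠ X')) (d : hom (X' ⊠ X) I) :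
  ru X ∘ (idm X ⊗ d ∘ (asc X X' X ∘ (c ⊗ idm X ∘ lui X))) = idm X ->
  ru X ∘ (idm X ⊗ d) ∘ asc X X' X ∘ (c ⊗ idm X) = lu X.
Proof.
move=> E; rewrite -[LHS]comp_id_r -(lunit_invK T X) !comp_assoc.
by rewrite !comp_assoc in E; rewrite E comp_id_l.
Qed.
End Coh.

Section Univ.
Variables (k : fieldType) (C : LinCat k) (T : Monoidal C) (R : RStr T).
Local Notation "f ∘ g" := (comp f g) (at level 40, left associativity).
Local Notation "f ⊗ g" := (tensm T f g) (at level 35).

Lemma univ (x y : C) (g : hom (dual R x) y) :
  (idm x ⊗ g) ∘ @rpsi _ _ _ R x (dual R x) (idm _) = rpsi g.
Proof.
apply: (can_inj (@rphiK _ _ _ R x y)).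
by rewrite rphi_nat rpsiK comp_id_r rpsiK.
Qed.
Lemma univ_inj (x y : C) (g h : hom (dual R x) y) :
  (idm x ⊗ g) ∘ @rpsi _ _ _ R x (dual R x) (idm _) =
  (idm x ⊗ h) ∘ @rpsi _ _ _ R x (dual R x) (idm _) -> g = h.
Proof. by rewrite !univ => /(can_inj (@rpsiK _ _ _ R x y)). Qed.
End Univ.


Section Build.
Variables (k : fieldType) (C : LinCat k) (T : Monoidal C) (R : RStr T).
Local Notation "f ∘ g" := (comp f g) (at level 40, left associativity).
Local Notation "f ⊗ g" := (tensm T f g) (at level 35).
Local Notation "x ⊠ y" := (tens T x y) (at level 35).
Local Notation I := (unit T).
Local Notation asc := (assoc T).
Local Notation asci := (assoc_inv T).
Local Notation lu := (lunit T).
Local Notation lui := (lunit_inv T).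
Local Notation ru := (runit T).
Local Notation rui := (runit_inv T).

Variables (M N Zp : C) (cZ : hom I ((M ⊠ N) ⊠ Zp)) (dZ : hom (Zp ⊠ (M ⊠ N)) I).
Hypothesis ZZ1 : ru (M ⊠ N) ∘ (idm (M ⊠ N) ⊗ dZ ∘ (asc (M ⊠ N) Zp (M ⊠ N) ∘ (cZ ⊗ idm (M ⊠ N) ∘ lui (M ⊠ N)))) = idm (M ⊠ N).
Variables (e : hom I (N ⊠ M)) (s : hom (N ⊠ M) I).
Hypothesis se : s ∘ e = idm I.

Local Notation Ms := (dual R M).
Definition cM : hom I (M ⊠ Ms) := @rpsi _ _ _ R M Ms (idm Ms).
Definition alp : hom Ms (N ⊠ Zp) := rphi R (asc M N Zp ∘ cZ).
Definition eps : hom M ((M ⊠ N) ⊠ M) := asci M N M ∘ (idm M ⊗ e) ∘ rui M.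
Definition gam : hom (Zp ⊠ ((M ⊠ N) ⊠ M)) M := lu M ∘ (dZ ⊗ idm M) ∘ asci Zp (M ⊠ N) M.
Definition bet : hom (Zp ⊠ M) M := gam ∘ (idm Zp ⊗ eps).
Definition dM : hom (Ms ⊠ M) I := s ∘ (idm N ⊗ bet) ∘ asc N Zp M ∘ (alp ⊗ idm M).

Lemma alpP : (idm M ⊗ alp) ∘ cM = asc M N Zp ∘ cZ.
Proof. by rewrite /cM univ /alp rphiK. Qed.

Lemma GZ : (idm (M ⊠ N) ⊗ gam) ∘ asc (M ⊠ N) Zp ((M ⊠ N) ⊠ M) ∘ (cZ ⊗ idm ((M ⊠ N) ⊠ M))
   ∘ lui ((M ⊠ N) ⊠ M) = idm _.
Proof.
rewrite /gam lemG (zigL ZZ1) K1i.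
exact: lunit_Kinv.
Qed.

Lemma stepF : (idm (M ⊠ N) ⊗ bet) ∘ asc (M ⊠ N) Zp M ∘ (cZ ⊗ idm M) ∘ lui M = eps.
Proof.
rewrite /bet tidl (tl2 (esym (assoc_nat T (idm (M ⊠ N)) (idm Zp) eps))) tensm_id !comp_assoc.
rewrite (tl2 (xch2 T cZ eps)) -(xch1 T cZ eps) !comp_assoc.
rewrite (tl2 (lui_nat T eps)) !comp_assoc.
by rewrite GZ comp_id_l.
Qed.

Lemma zig1 : ru M ∘ (idm M ⊗ dM ∘ (asc M Ms M ∘ (cM ⊗ idm M ∘ lui M))) = idm M.
Proof.
rewrite /dM tidl tidl tidl !comp_assoc.
rewrite (tl2 (esym (assoc_nat T (idm M) alp (idm M)))) !comp_assoc.
rewrite (tl2 (esym (tidr T M (idm M ⊗ alp) cM))) alpP tidr !comp_assoc.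
have P : forall a b c d : C, (idm a ⊗ asc b c d) ∘ asc a (b ⊠ c) d ∘ (asc a b c ⊗ idm d)
   = asc a b (c ⊠ d) ∘ asc (a ⊠ b) c d.
  by move=> a b c d; rewrite -comp_assoc pentagon.
rewrite (tl3 (P _ _ _ _)) !comp_assoc.
rewrite (tl2 (esym (assoc_nat T (idm M) (idm N) bet))) tensm_id !comp_assoc.
rewrite (tl4 stepF) /eps !comp_assoc.
rewrite (tl2 (assoc_Kinv T M N M)) comp_id_r.
by rewrite (tl2 (esym (tidl T M s e))) se tensm_id comp_id_r runit_Kinv.
Qed.

Lemma zig2 : lu Ms ∘ (dM ⊗ idm Ms ∘ (asci Ms M Ms ∘ (idm Ms ⊗ cM ∘ rui Ms))) = idm Ms.
Proof.
apply: (@univ_inj _ _ _ R).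
rewrite tensm_id comp_id_l.
set gp := lu Ms ∘ (dM ⊗ idm Ms) ∘ asci Ms M Ms.
have -> : lu Ms ∘ (dM ⊗ idm Ms ∘ (asci Ms M Ms ∘ (idm Ms ⊗ cM ∘ rui Ms)))
   = gp ∘ (idm Ms ⊗ cM) ∘ rui Ms by rewrite /gp !comp_assoc.
rewrite tidl tidl K2i !comp_assoc.
rewrite (tl2 (esym (rui_nat T cM))) !comp_assoc.
rewrite (tl2 (esym (assoc_nat T (idm M) (idm Ms) cM))) tensm_id !comp_assoc.
rewrite (tl2 (xch2 T cM cM)) -(xch1 T cM cM) !comp_assoc.
rewrite /gp lemG (zigL zig1) K1i.
by rewrite lunit_nat K3 -comp_assoc runit_Kinv comp_id_r.
Qed.

End Build.


Section Ab.
Variables (k : fieldType) (C : LinCat k).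
Local Notation "f ∘ g" := (comp f g) (at level 40, left associativity).

Lemma kernel_mono (a b z : C) (f : hom a b) (m : hom z a) : is_kernel f m -> mono m.
Proof.
move=> [fm0 H] w g h E.
have : f ∘ (m ∘ g) = 0 by rewrite comp_assoc fm0 comp0l.
case/H=> u [_ U].
by rewrite -(U g erefl) -(U h (esym E)).
Qed.

Lemma simple_iso (x y : C) : abelian C -> simple x -> simple y ->
  forall f : hom x y, f <> 0 -> iso f.
Proof.
move=> [_ [_ [Hker _]]] Hx Hy f Hf.
have [z [m Hk]] := Hker _ _ f.
have Hfm : f ∘ m = 0 by case: Hk.
case: (Hx.2 z m (kernel_mono Hk)) => [Hz | [g [gm mg]]]; last first.
  by exfalso; apply: Hf; rewrite -[f]comp_id_r -mg comp_assoc Hfm comp0l.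
have Mf : mono f.
  move=> w g h E.
  have : f ∘ (g - h) = 0 by rewrite compBr E subrr.
  case/(Hk.2 w) => u [Hu _].
  move: Hu; have -> : u = 0 by apply: Hz.2.
  by rewrite comp0r => /esym/eqP; rewrite subr_eq0 => /eqP.
by case: (Hy.2 x f Mf) => // Hz0; case: Hx.
Qed.

Lemma split_unit (U : C) : abelian C -> simple U ->
  forall P : C, sum_of_simples P -> forall f : hom U P, f <> 0 ->
  exists s : hom P U, s ∘ f = idm U.
Proof.
move=> Hab HU P HP; elim: HP => [z Hz | a s' p i1 i2 p1 p2 Ha IH Hs Hb] f Hf.
  by exfalso; apply: Hf; apply: Hz.2.
case: Hb => h1 h2 h3 h4 h5.
case: (eqVneq (p2 ∘ f) 0) => H2.
  have H1 : p1 ∘ f <> 0.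
    move=> H1; apply: Hf.
    by rewrite -[f]comp_id_l -h5 compDl -!comp_assoc H1 H2 !comp0r addr0.
  have [t Ht] := IH _ H1.
  by exists (t ∘ p1); rewrite -comp_assoc.
have [g [g1 g2]] := simple_iso Hab HU Hs (f := p2 ∘ f) (elimN eqP H2).
by exists (g ∘ p2); rewrite -comp_assoc.
Qed.

End Ab.

Theorem proposition2p10 (k : closedFieldType) (C : LinCat k) (T : Monoidal C)
  (R : RStr T) (HC : weakly_fusion R)
  (M : C) (HM : simple M)
  (N : C) (HN : isomorphic (dual R N) M)  (* N plays the role of  *M *)
  (Hd : has_rigid_left_dual T (tens T M N)) :
  has_rigid_left_dual T M.
Proof.
case: HC => [[Hab Hss _ _] _ HU].
case: Hd => Zp [cZ [dZ [ZZ1 _]]].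
case: HN => f [g [gf fg]].
pose e := @rpsi _ _ _ R N M f.
have He : e <> 0.
  move=> E0.
  have Ef : f = 0.
    have E1 : e = comp (tensm T (idm N) (0 : hom M M)) e by rewrite [in RHS]E0 comp0r.
    by rewrite -(rpsiK f) -/e E1 rphi_nat comp0l.
  apply: HM.1; split => a u v.
    by rewrite -[u]comp_id_r -[v]comp_id_r -fg Ef comp0l !comp0r.
  by rewrite -[u]comp_id_l -[v]comp_id_l -fg Ef comp0l !comp0l.
have [s se] := split_unit Hab HU (Hss _) He.
exists (dual R M), (cM R M), (dM R cZ dZ e s).
split; [exact: zig1 | exact: zig2].
Qed.
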